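(* Let $s\colon\mathbb{R}\to[0,\infty)$ be convex and lower semi-continuous with $s(0)=0$, and let $\kappa,\alpha>0$. Suppose there exist $b,c>0$ such that for all $x\in\mathbb{R}$: $$|x|\le \min\big(\operatorname{prox}_{\alpha s}^{-1}(c\kappa)\big)\ \Longrightarrow\ |\operatorname{prox}_{\alpha s}(x)|\le \frac{\kappa^2}{\kappa^2+\alpha b}|x|.$$ Then for all $y\in\mathbb{R}$: if $|y|\le c\kappa$ then $s(y)\ge \frac b2\,|y/\kappa|^2$; and if $|y|>c\kappa$ then $s(y)\ge bc\,|y/\kappa|-\frac{bc^2}{2}$.
   Context: For a proper convex lower semi-continuous $f\colon\mathbb{R}\to\mathbb{R}\cup\{\infty\}$, $\operatorname{prox}_f(x)=\operatorname{argmin}_{y\in\mathbb{R}}\tfrac12|x-y|^2+f(y)$; one has $\operatorname{prox}_f=(\mathrm{id}+\partial f)^{-1}$. $\operatorname{prox}_{\alpha s}^{-1}(c\kappa)=\{x:\operatorname{prox}_{\alpha s}(x)=c\kappa\}$ is a closed interval, and $\min$ of it denotes its smallest element (infimum). *)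

(* Defs.v *)
From Stdlib Require Export Reals.
Open Scope R_scope.

Definition convex_fun (f : R -> R) : Prop :=
  forall x y t, 0 <= t <= 1 ->
    f (t * x + (1 - t) * y) <= t * f x + (1 - t) * f y.

Definition lsc (f : R -> R) : Prop :=
  forall x eps, 0 < eps -> exists delta, 0 < delta /\
    forall y, Rabs (y - x) < delta -> f x - eps < f y.

(* p = prox_f(x), i.e. p is a minimiser of y |-> 1/2 |x - y|^2 + f y.
   (For convex f the minimiser is unique, so this relation is a function.) *)
Definition is_prox (f : R -> R) (x p : R) : Prop :=
  forall y, / 2 * (x - p) ^ 2 + f p <= / 2 * (x - y) ^ 2 + f y.

Definition is_min_prox_preimage (f : R -> R) (v m : R) : Prop :=
  is_prox f m v /\ (forall x, is_prox f x v -> m <= x).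

(* Main.v *)
Require Import Defs.
From Stdlib Require Import Reals Lra Lia Psatz.
Open Scope R_scope.

Lemma le_div x a d : 0 < d -> x * d <= a -> x <= a / d.
Proof.
  intros hd h. apply Rmult_le_reg_r with d; [exact hd|].
  replace (a / d * d) with a by (field; lra). exact h.
Qed.

Lemma div_le x a d : 0 < d -> a <= x * d -> a / d <= x.
Proof.
  intros hd h. apply Rmult_le_reg_r with d; [exact hd|].
  replace (a / d * d) with a by (field; lra). exact h.
Qed.

Lemma div_le_inv x a d : 0 < d -> a / d <= x -> a <= x * d.
Proof.
  intros hd h. replace a with (a / d * d) by (field; lra).
  apply Rmult_le_compat_r; lra.
Qed.

Lemma le_div_inv x a d : 0 < d -> x <= a / d -> x * d <= a.
Proof.
  intros hd h. replace a with (a / d * d) by (field; lra).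
  apply Rmult_le_compat_r; lra.
Qed.

Lemma div_le_compat a b d1 d2 : 0 < d1 -> 0 < d2 -> a * d2 <= b * d1 -> a / d1 <= b / d2.
Proof.
  intros h1 h2 h. apply le_div; [exact h2|].
  replace (a / d1 * d2) with ((a * d2) / d1) by (field; lra).
  apply div_le; [exact h1|]. lra.
Qed.

Lemma chord (f : R -> R) (hf : convex_fun f) a b c : a < b < c ->
  (c - a) * f b <= (c - b) * f a + (b - a) * f c.
Proof.
  intros [hab hbc].
  set (t := (c - b) / (c - a)).
  assert (ht0 : 0 <= t) by (apply le_div; lra).
  assert (ht1 : t <= 1) by (apply div_le; lra).
  assert (e : t * a + (1 - t) * c = b) by (unfold t; field; lra).
  pose proof (hf a c t (conj ht0 ht1)) as H. rewrite e in H.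
  apply Rmult_le_compat_l with (r := c - a) in H; [|lra].
  replace ((c - a) * (t * f a + (1 - t) * f c)) with ((c - b) * f a + (b - a) * f c)
    in H by (unfold t; field; lra).
  exact H.
Qed.

Lemma S1 (f : R -> R) (hf : convex_fun f) v y y' : y < y' < v ->
  (f v - f y) / (v - y) <= (f v - f y') / (v - y').
Proof.
  intros h. pose proof (chord f hf y y' v h).
  apply div_le_compat; lra.
Qed.

Lemma S2 (f : R -> R) (hf : convex_fun f) y v z : y < v < z ->
  (f v - f y) / (v - y) <= (f z - f v) / (z - v).
Proof.
  intros h. pose proof (chord f hf y v z h).
  apply div_le_compat; lra.
Qed.

Lemma left_deriv (f : R -> R) (hf : convex_fun f) (v : R) :
  exists d, (forall y, y < v -> (f v - f y) / (v - y) <= d) /\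
            (forall z, v < z -> d <= (f z - f v) / (z - v)) /\
            (forall x, is_prox f x v -> d <= x - v).
Proof.
  set (E := fun r => exists y, y < v /\ r = (f v - f y) / (v - y)).
  assert (hb : bound E).
  { exists ((f (v + 1) - f v) / (v + 1 - v)). intros r [y [hy ->]]. apply S2; [exact hf|lra]. }
  assert (hne : exists r, E r).
  { exists ((f v - f (v - 1)) / (v - (v - 1))). exists (v - 1). split; [lra|reflexivity]. }
  destruct (completeness E hb hne) as [d [hub hlub]].
  exists d. split; [|split].
  - intros y hy. apply hub. exists y. split; auto.
  - intros z hz. apply hlub. intros r [y [hy ->]]. apply S2; [exact hf|lra].
  - intros x hx. apply hlub. intros r [y [hy ->]].
    destruct (Rle_or_lt ((f v - f y) / (v - y)) (x - v)) as [h|h]; [exact h|exfalso].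
    set (Q := (f v - f y) / (v - y)) in *.
    set (del := Rmin (v - y) (Q - (x - v))).
    assert (hdel : 0 < del) by (unfold del; apply Rmin_glb_lt; lra).
    assert (hd1 : del <= v - y) by apply Rmin_l.
    assert (hd2 : del <= Q - (x - v)) by apply Rmin_r.
    assert (hQ : Q <= (f v - f (v - del)) / (v - (v - del))).
    { destruct (Req_dec del (v - y)) as [e|e].
      - replace (v - del) with y by lra. unfold Q. lra.
      - apply S1; [exact hf|lra]. }
    specialize (hx (v - del)).
    replace (v - (v - del)) with del in hQ by field.
    assert (h2 : (f v - f (v - del)) / del <= (x - v) + del / 2).
    { apply div_le; [lra|]. nra. }
    lra.
Qed.

Lemma subgrad (f : R -> R) v d :
  (forall y, y < v -> (f v - f y) / (v - y) <= d) ->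
  (forall z, v < z -> d <= (f z - f v) / (z - v)) ->
  forall y, f v + d * (y - v) <= f y.
Proof.
  intros h1 h2 y.
  destruct (Rtotal_order y v) as [hy|[hy|hy]].
  - pose proof (div_le_inv d (f v - f y) (v - y) ltac:(lra) (h1 y hy)). nra.
  - subst. lra.
  - pose proof (le_div_inv d (f y - f v) (y - v) ltac:(lra) (h2 y hy)). nra.
Qed.

Lemma prox_of_subgrad (f : R -> R) v d :
  (forall y, f v + d * (y - v) <= f y) -> is_prox f (v + d) v.
Proof.
  intros h y. specialize (h y). unfold is_prox.
  pose proof (pow2_ge_0 (y - v)).
  replace (/ 2 * (v + d - y) ^ 2) with (/ 2 * (v + d - v) ^ 2 - d * (y - v) + / 2 * (y - v) ^ 2) by field.
  lra.
Qed.

Lemma quad (f : R -> R) (L Y : R) : 0 <= L -> 0 < Y -> f 0 = 0 -> (forall t, 0 <= f t) ->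
  (forall p, 0 < p < Y -> exists d, L * p <= d /\ forall y, f p + d * (y - p) <= f y) ->
  L * Y ^ 2 / 2 <= f Y.
Proof.
  intros hL hY h0 hnn hd.
  assert (key : forall n, (0 < n)%nat -> L * Y ^ 2 / 2 - L * Y ^ 2 / (2 * INR n) <= f Y).
  { intros n hn. set (h := Y / INR n).
    assert (hnpos : 0 < INR n) by (apply lt_0_INR; lia).
    assert (hh : 0 < h) by (unfold h; apply Rdiv_lt_0_compat; lra).
    assert (hdef : Y = INR n * h) by (unfold h; field; lra).
    clearbody h.
    assert (ind : forall k, (k <= n)%nat ->
               L * h ^ 2 * (INR k * INR k - INR k) / 2 <= f (INR k * h)).
    { induction k as [|k IH]; intros hk.
      - replace (INR 0 * h) with 0 by (rewrite ?INR_0, ?INR_1; field). rewrite h0. simpl. lra.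
      - destruct k as [|k'].
        + replace (INR 1 * INR 1 - INR 1) with 0 by (rewrite ?INR_0, ?INR_1; field).
          replace (L * h ^ 2 * 0 / 2) with 0 by field. apply hnn.
        + specialize (IH ltac:(lia)).
          set (k := INR (S k')) in *.
          rewrite (S_INR (S k')). fold k.
          assert (hk0 : 0 < k) by (unfold k; apply lt_0_INR; lia).
          assert (hkn : k < INR n) by (unfold k; apply lt_INR; lia).
          assert (hp : 0 < k * h < Y).
          { split; [nra|]. rewrite hdef. nra. }
          destruct (hd (k * h) hp) as [d [hdL hsub]].
          specialize (hsub ((k + 1) * h)).
          assert (hdh : L * (k * h) * h <= d * h) by (apply Rmult_le_compat_r; lra).
          replace ((k + 1) * h - k * h) with h in hsub by field.
          replace (L * h ^ 2 * ((k + 1) * (k + 1) - (k + 1)) / 2)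
            with (L * h ^ 2 * (k * k - k) / 2 + L * (k * h) * h) by field.
          lra. }
    specialize (ind n (le_n n)).
    rewrite <- hdef in ind.
    replace (L * Y ^ 2 / 2 - L * Y ^ 2 / (2 * INR n))
      with (L * h ^ 2 * (INR n * INR n - INR n) / 2) by (rewrite hdef; field; lra).
    exact ind. }
  destruct (Rle_or_lt (L * Y ^ 2 / 2) (f Y)) as [h|h]; [exact h|exfalso].
  set (A := L * Y ^ 2 / 2) in *.
  assert (hA : 0 < A) by (pose proof (hnn Y); lra).
  destruct (archimed_cor1 ((A - f Y) / A) ltac:(apply Rdiv_lt_0_compat; lra)) as [N [hN hN0]].
  specialize (key N hN0).
  assert (hNpos : 0 < INR N) by (apply lt_0_INR; lia).
  replace (L * Y ^ 2 / (2 * INR N)) with (A * / INR N) in key by (unfold A; field; lra).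
  assert (A * / INR N < A * ((A - f Y) / A)) by (apply Rmult_lt_compat_l; lra).
  replace (A * ((A - f Y) / A)) with (A - f Y) in H by (field; lra).
  lra.
Qed.

Theorem lemma2p3 (s : R -> R) (kappa alpha b c : R)
  (hs_nonneg : forall x, 0 <= s x)
  (hs_convex : convex_fun s)
  (hs_lsc : lsc s)
  (hs0 : s 0 = 0)
  (hkappa : 0 < kappa) (halpha : 0 < alpha)
  (hb : 0 < b) (hc : 0 < c)
  (hprox : forall m, is_min_prox_preimage (fun y => alpha * s y) (c * kappa) m ->
     forall x p, is_prox (fun y => alpha * s y) x p ->
       Rabs x <= m ->
       Rabs p <= kappa ^ 2 / (kappa ^ 2 + alpha * b) * Rabs x) :
  forall y,
    (Rabs y <= c * kappa -> s y >= b / 2 * (Rabs (y / kappa)) ^ 2) /\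
    (Rabs y > c * kappa -> s y >= b * c * Rabs (y / kappa) - b * c ^ 2 / 2).
Proof.
  set (f := fun y => alpha * s y) in hprox.
  assert (hf : convex_fun f).
  { intros x y t ht. unfold f. pose proof (hs_convex x y t ht).
    apply Rmult_le_compat_l with (r := alpha) in H; [|lra]. lra. }
  assert (hf0 : f 0 = 0) by (unfold f; rewrite hs0; field).
  assert (hfnn : forall t, 0 <= f t) by (intro t; unfold f; pose proof (hs_nonneg t); nra).
  set (C := c * kappa) in *.
  assert (hC : 0 < C) by (unfold C; nra).
  set (L := alpha * b / kappa ^ 2).
  assert (hL : 0 < L) by (unfold L; apply Rdiv_lt_0_compat; nra).
  assert (hk2 : 0 < kappa ^ 2) by nra.
  assert (hden : 0 < kappa ^ 2 + alpha * b) by nra.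
  destruct (left_deriv f hf C) as [dC [hC1 [hC2 hC3]]].
  set (M := C + dC).
  assert (hmin : is_min_prox_preimage f C M).
  { split. - apply prox_of_subgrad. apply subgrad; assumption.
    - intros x hx. specialize (hC3 x hx). unfold M. lra. }
  pose proof (hprox M hmin) as H.
  assert (step2 : forall p d, 0 < p <= C ->
    (forall y, y < p -> (f p - f y) / (p - y) <= d) ->
    (forall z, p < z -> d <= (f z - f p) / (z - p)) ->
    (forall x, is_prox f x p -> d <= x - p) -> L * p <= d).
  { intros p d hp hp1 hp2 hp3.
    assert (hd0 : 0 <= d).
    { pose proof (hp1 0 ltac:(lra)). rewrite hf0 in H0.
      assert (0 <= (f p - 0) / (p - 0)) by (apply le_div; [lra|]; rewrite Rmult_0_l; specialize (hfnn p); lra).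
      lra. }
    assert (hdC : d <= dC).
    { destruct (Req_dec p C) as [e|e].
      - subst p. specialize (hp3 M (proj1 hmin)). unfold M in hp3. lra.
      - pose proof (hp2 C ltac:(lra)). pose proof (hC1 p ltac:(lra)). lra. }
    assert (hx : is_prox f (p + d) p) by (apply prox_of_subgrad; apply subgrad; assumption).
    pose proof (H (p + d) p hx) as Hp.
    rewrite (Rabs_right (p + d)) in Hp by lra.
    rewrite (Rabs_right p) in Hp by lra.
    specialize (Hp ltac:(unfold M; lra)).
    apply Rmult_le_compat_l with (r := kappa ^ 2 + alpha * b) in Hp; [|lra].
    replace ((kappa ^ 2 + alpha * b) * (kappa ^ 2 / (kappa ^ 2 + alpha * b) * (p + d)))
      with (kappa ^ 2 * (p + d)) in Hp by (field; lra).
    unfold L. replace (alpha * b / kappa ^ 2 * p) with ((alpha * b * p) / kappa ^ 2) by (field; lra).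
    apply div_le; [lra|]. nra. }
  assert (hdCL : L * C <= dC) by (apply step2; auto; lra).
  assert (step3 : forall p d, - C <= p < 0 ->
    (forall y, y < p -> (f p - f y) / (p - y) <= d) ->
    (forall z, p < z -> d <= (f z - f p) / (z - p)) -> d <= L * p).
  { intros p d hp hp1 hp2.
    assert (hsub := subgrad f p d hp1 hp2).
    assert (hd0 : d <= 0).
    { specialize (hsub 0). rewrite hf0 in hsub. specialize (hfnn p). nra. }
    destruct (Rle_or_lt (- M) (p + d)) as [hx|hx].
    - assert (hpx : is_prox f (p + d) p) by (apply prox_of_subgrad; exact hsub).
      pose proof (H (p + d) p hpx) as Hp.
      rewrite (Rabs_left1 (p + d)) in Hp by lra.
      rewrite (Rabs_left p) in Hp by lra.
      specialize (Hp ltac:(lra)).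
      apply Rmult_le_compat_l with (r := kappa ^ 2 + alpha * b) in Hp; [|lra].
      replace ((kappa ^ 2 + alpha * b) * (kappa ^ 2 / (kappa ^ 2 + alpha * b) * - (p + d)))
        with (kappa ^ 2 * - (p + d)) in Hp by (field; lra).
      unfold L. replace (alpha * b / kappa ^ 2 * p) with ((alpha * b * p) / kappa ^ 2) by (field; lra).
      apply le_div; [lra|]. nra.
    - unfold M in hx.
      assert (0 <= L * (p + C)) by (apply Rmult_le_pos; lra).
      nra. }
  assert (quadpos : forall Y, 0 < Y <= C -> L * Y ^ 2 / 2 <= f Y).
  { intros Y hY. apply quad; try lra; auto.
    intros p hp. destruct (left_deriv f hf p) as [d [h1 [h2 h3]]].
    exists d. split.
    - apply step2; auto; lra.
    - apply subgrad; assumption. }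
  assert (quadneg : forall Y, 0 < Y <= C -> L * Y ^ 2 / 2 <= f (- Y)).
  { intros Y hY. apply (quad (fun t => f (- t))); try lra.
    - simpl. rewrite Ropp_0. exact hf0.
    - intro t. apply hfnn.
    - intros p hp. destruct (left_deriv f hf (- p)) as [d [h1 [h2 h3]]].
      exists (- d). split.
      + pose proof (step3 (- p) d ltac:(lra) h1 h2). lra.
      + intros y. pose proof (subgrad f (- p) d h1 h2 (- y)). lra. }
  intros y. split.
  - intros hy.
    rewrite pow2_abs.
    replace (b / 2 * (y / kappa) ^ 2) with ((L * y ^ 2 / 2) / alpha) by (unfold L; field; lra).
    apply Rle_ge. apply div_le; [lra|].
    replace (s y * alpha) with (f y) by (unfold f; field).
    destruct (Rtotal_order y 0) as [h|[h|h]].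
    + replace y with (- (- y)) by field. replace ((- - y) ^ 2) with ((- y) ^ 2) by field.
      apply quadneg. split; [lra|]. rewrite Rabs_left in hy; lra.
    + subst. rewrite hf0. lra.
    + apply quadpos. split; [lra|]. rewrite Rabs_right in hy; lra.
  - intros hy. apply Rle_ge.
    destruct (Rle_or_lt 0 y) as [h|h].
    + rewrite Rabs_right in hy by lra.
      rewrite Rabs_right by (apply Rle_ge; apply le_div; lra).
      replace (b * c * (y / kappa) - b * c ^ 2 / 2) with ((L * C * y - L * C ^ 2 / 2) / alpha)
        by (unfold L, C; field; lra).
      apply div_le; [lra|].
      replace (s y * alpha) with (f y) by (unfold f; field).
      pose proof (subgrad f C dC hC1 hC2 y).
      pose proof (quadpos C ltac:(lra)).
      assert (L * C * (y - C) <= dC * (y - C)) by (apply Rmult_le_compat_r; lra).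
      nra.
    + rewrite Rabs_left in hy by lra.
      assert (hq : 0 < - y / kappa) by (apply Rdiv_lt_0_compat; lra).
      rewrite Rabs_left by (replace (- y / kappa) with (- (y / kappa)) in hq by (field; lra); lra).
      replace (b * c * - (y / kappa) - b * c ^ 2 / 2) with ((L * C * (- y) - L * C ^ 2 / 2) / alpha)
        by (unfold L, C; field; lra).
      apply div_le; [lra|].
      replace (s y * alpha) with (f y) by (unfold f; field).
      destruct (left_deriv f hf (- C)) as [d [h1 [h2 h3]]].
      pose proof (step3 (- C) d ltac:(lra) h1 h2).
      pose proof (subgrad f (- C) d h1 h2 y).
      pose proof (quadneg C ltac:(lra)).
      assert (d * (y - - C) >= L * - C * (y - - C)) by nra.
      nra.
Qed.
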